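(* For every integer $n\ge 1$, $R_n(x)=L_{2n,n}(x)$.
   Context: An even tree is a rooted plane (ordered) tree in which every vertex has an even number of children. If a vertex has $2k$ children, its first $k$ children (in the plane order) are called left children and its last $k$ children are called right children. The degree of a vertex means its number of children. The $r$-index $r(T)$ of an even tree $T$ is half of the sum of the degrees of all vertices of $T$ that are right children. Let $R_{n,k}$ be the number of even trees with $2n$ edges and $r$-index $k$, and $R_n(x)=\sum_{k=0}^{n-1}R_{n,k}x^k$. Lattice polynomials: for integers $i,j\ge 0$, consider lattice paths from $(0,0)$ to $(i,j)$ consisting of unit east steps $(1,0)$ and unit north steps $(0,1)$ such that no step goes above the line $x=2y$ (every lattice point $(a,b)$ visited satisfies $a\ge 2b$). A north step from $(k,\ell)$ to $(k,\ell+1)$ receives weight $x$ if $k$ is odd; all other steps receive weight $1$. The weight of a path is the product of its step weights, and $L_{i,j}(x)$ is the sum of the weights of all such paths. *)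

(* Defs.v *)
From HB Require Import structures.
From mathcomp Require Import all_boot all_order all_algebra.
Set Implicit Arguments. Unset Strict Implicit. Unset Printing Implicit Defensive.
Import GRing.Theory.

(* Rooted plane (ordered) trees: a vertex is the ordered list of its children. *)
Inductive tree := Node of seq tree.

Fixpoint encode (t : tree) : GenTree.tree unit :=
  let: Node ts := t in GenTree.Node 0 (map encode ts).
Fixpoint decode (g : GenTree.tree unit) : tree :=
  match g with
  | GenTree.Leaf _ => Node [::]
  | GenTree.Node _ gs => Node (map decode gs)
  end.
Lemma encodeK : cancel encode decode.
Proof.
rewrite /cancel; fix IH 1; case=> ts /=; congr Node; elim: ts => [|t ts IHts] //=.
by rewrite IH IHts.
Qed.
HB.instance Definition _ := Equality.copy tree (can_type encodeK).

Definition children (t : tree) : seq tree := let: Node ts := t in ts.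
Definition deg (t : tree) : nat := size (children t).

Fixpoint edges (t : tree) : nat :=
  let: Node ts := t in sumn (map (fun c => (edges c).+1) ts).

Fixpoint even_tree (t : tree) : bool :=
  let: Node ts := t in ~~ odd (size ts) && all even_tree ts.

(* sum of the degrees of all vertices of t that are right children, i.e.
   among the last (size ts)/2 children of their parent (the root is not a
   child of anything) *)
Fixpoint rdeg (t : tree) : nat :=
  let: Node ts := t in
  sumn (map rdeg ts) + sumn (map deg (drop (size ts)./2 ts)).

Definition rindex (t : tree) : nat := (rdeg t)./2.

(* Enumeration of plane forests with e edges (fuel f >= e) and of plane
   trees with m edges. *)
Fixpoint forests (f e : nat) : seq (seq tree) :=
  match f with
  | 0 => if e == 0 then [:: [::]] else [::]
  | f'.+1 =>
    if e == 0 then [:: [::]] else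
    flatten [seq [seq Node c :: rest | c <- forests f' a,
                                       rest <- forests f' (e - a.+1)]
            | a <- iota 0 e]
  end.
Definition trees_enum (m : nat) : seq tree := [seq Node c | c <- forests m m].

Definition Rcount (n k : nat) : nat :=
  count (fun t => even_tree t && (rindex t == k)) (trees_enum (2 * n)).

Local Open Scope ring_scope.

Definition Rpoly (n : nat) : {poly int} :=
  \sum_(k < n) (Rcount n k)%:R *: 'X^k.

(* Lattice paths from (0,0) to (i,j) with unit E/N steps, encoded as a
   (i+j)-tuple of booleans (true = north step). *)
Definition npre (m : nat) (p : m.-tuple bool) (s : nat) : nat := count id (take s p).
Definition epre (m : nat) (p : m.-tuple bool) (s : nat) : nat := count negb (take s p).

Definition ends_at (i j : nat) (p : (i + j).-tuple bool) : bool :=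
  npre p (i + j) == j.

Definition below_line (m : nat) (p : m.-tuple bool) : bool :=
  [forall s : 'I_m.+1, (2 * npre p s <= epre p s)%N].

Definition path_weight (m : nat) (p : m.-tuple bool) : {poly int} :=
  \prod_(s < m) (if tnth p s && odd (epre p s) then 'X else 1).

Definition Lpoly (i j : nat) : {poly int} :=
  \sum_(p : (i + j).-tuple bool | ends_at p && below_line p) path_weight p.

(* Main.v *)
Require Import Defs.
From mathcomp Require Import all_boot all_order all_algebra.
From mathcomp Require Import zify ring.
Set Implicit Arguments. Unset Strict Implicit. Unset Printing Implicit Defensive.
Import GRing.Theory.
Local Open Scope ring_scope.

Notation R := {poly int}.
Definition xv : R := 'X.

Definition eqN (N : nat) (p q : {poly R}) := forall i, (i < N)%N -> p`_i = q`_i.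

Lemma eqN_refl N p : eqN N p p. Proof. by []. Qed.
Lemma eqN_sym N p q : eqN N p q -> eqN N q p. Proof. by move=> H i Hi; rewrite H. Qed.
Lemma eqN_trans N p q r : eqN N p q -> eqN N q r -> eqN N p r.
Proof. by move=> H1 H2 i Hi; rewrite H1 ?H2. Qed.
Lemma eqN_le N M p q : (M <= N)%N -> eqN N p q -> eqN M p q.
Proof. by move=> HM H i Hi; apply: H; apply: leq_trans HM. Qed.
Lemma eqN_add N p q p' q' : eqN N p p' -> eqN N q q' -> eqN N (p + q) (p' + q').
Proof. by move=> H1 H2 i Hi; rewrite !coefD H1 ?H2. Qed.
Lemma eqN_mul N p q p' q' : eqN N p p' -> eqN N q q' -> eqN N (p * q) (p' * q').
Proof.
move=> H1 H2 i Hi; rewrite !coefM; apply: eq_bigr => j _.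
have Hj := ltn_ord j; rewrite H1 ?H2 //; lia.
Qed.
Lemma eqN_Xn N k p q : eqN N p q -> eqN (N + k) ('X^k * p) ('X^k * q).
Proof.
move=> H i Hi; rewrite !coefXnM; case: ltnP => // Hk; apply: H.
by rewrite ltn_subLR // addnC.
Qed.
Lemma eqN_X N p q : eqN N p q -> eqN N.+1 ('X * p) ('X * q).
Proof. by move=> /(@eqN_Xn _ 1); rewrite expr1 addn1. Qed.
Lemma eqN_Xn0 N k p : (N <= k)%N -> eqN N ('X^k * p) 0.
Proof. by move=> Hk i Hi; rewrite coefXnM coef0 (leq_trans Hi Hk). Qed.

Definition sys (k N : nat) (P Q : {poly R}) :=
  eqN N P (1 + 'X^k * (Q * P * P)) /\ eqN N Q (1 + xv%:P * 'X^k * (P * Q * Q)).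

Lemma sys_uniq k N P Q P' Q' : (0 < k)%N -> sys k N P Q -> sys k N P' Q' ->
  eqN N P P' /\ eqN N Q Q'.
Proof.
move=> k0 [H1 H2] [H1' H2'].
suff: forall j, (j <= N)%N -> eqN j P P' /\ eqN j Q Q' by apply.
elim=> [|j IH] Hj; first by split=> i.
have [E1 E2] := IH (ltnW Hj).
have Hl: (j.+1 <= j + k)%N by rewrite -addn1 leq_add2l.
split.
- apply: eqN_trans (eqN_le Hj H1) _; apply: eqN_trans _ (eqN_sym (eqN_le Hj H1')).
  apply: eqN_add => //; apply: (eqN_le Hl); apply: eqN_Xn.
  by do 2 apply: eqN_mul => //.
- apply: eqN_trans (eqN_le Hj H2) _; apply: eqN_trans _ (eqN_sym (eqN_le Hj H2')).
  apply: eqN_add => //; rewrite -!mulrA; apply: eqN_mul => //.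
  apply: (eqN_le Hl); apply: eqN_Xn.
  by do 2 apply: eqN_mul => //.
Qed.

Fixpoint FG (i : nat) : {poly R} * {poly R} :=
  match i with
  | 0 => (1, 1)
  | i'.+1 =>
      (1 + 'X * ((FG i').2 * (FG i').1 * (FG i').1),
       1 + xv%:P * 'X * ((FG i').1 * (FG i').2 * (FG i').2))
  end.

Lemma FGS1 i : (FG i.+1).1 = 1 + 'X * ((FG i).2 * (FG i).1 * (FG i).1).
Proof. by []. Qed.
Lemma FGS2 i : (FG i.+1).2 = 1 + xv%:P * 'X * ((FG i).1 * (FG i).2 * (FG i).2).
Proof. by []. Qed.

Lemma FG_step i : eqN i (FG i).1 (FG i.+1).1 /\ eqN i (FG i).2 (FG i.+1).2.
Proof.
elim: i => [|i [IH1 IH2]]; first by split=> j.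
rewrite (FGS1 i) (FGS2 i) (FGS1 i.+1) (FGS2 i.+1).
split; apply: eqN_add => //.
  by apply: eqN_X; do 2 apply: eqN_mul => //.
rewrite -!mulrA; apply: eqN_mul => //; apply: eqN_X.
by do 2 apply: eqN_mul => //.
Qed.

Lemma FG_sys i : sys 1 i (FG i).1 (FG i).2.
Proof.
case: i => [|i]; first by split=> j.
have [E1 E2] := FG_step i.
rewrite /sys expr1 {1}(FGS1 i) {2}(FGS2 i).
split; apply: eqN_add => //.
  by apply: eqN_X; do 2 apply: eqN_mul => //.
rewrite -!mulrA; apply: eqN_mul => //; apply: eqN_X.
by do 2 apply: eqN_mul => //.
Qed.

Lemma eqN_comp k M p q : (0 < k)%N -> eqN M p q ->
  eqN (k * M) (p \Po 'X^k) (q \Po 'X^k).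
Proof.
move=> k0 H i Hi; rewrite !coef_comp_poly_Xn //; case: ifP => // _.
by apply: H; rewrite ltn_divLR // mulnC.
Qed.

Lemma sys_comp k M F G : (0 < k)%N -> sys 1 M F G ->
  sys k (k * M) (F \Po 'X^k) (G \Po 'X^k).
Proof.
move=> k0 [H1 H2]; split.
  move: (eqN_comp k0 H1); rewrite expr1 comp_polyD !comp_polyM comp_polyX -polyC1 comp_polyC.
  by rewrite polyC1.
move: (eqN_comp k0 H2); rewrite expr1 comp_polyD !comp_polyM comp_polyX -polyC1 !comp_polyC.
by rewrite polyC1.
Qed.

Lemma scaled_eq k1 k2 P1 Q1 P2 Q2 n :
  (0 < k1)%N -> (0 < k2)%N ->
  (forall N, sys k1 N P1 Q1) -> (forall N, sys k2 N P2 Q2) ->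
  P1`_(k1 * n) = P2`_(k2 * n).
Proof.
move=> k10 k20 S1 S2.
set M := n.+1.
have [E1 _] := sys_uniq k10 (S1 (k1 * M)) (sys_comp k10 (FG_sys M)).
have [E2 _] := sys_uniq k20 (S2 (k2 * M)) (sys_comp k20 (FG_sys M)).
rewrite E1 ?E2 ?ltn_pmul2l // !coef_comp_poly_Xn // !dvdn_mulr // !mulKn //.
Qed.


Definition ser (g : nat -> R) (N : nat) : {poly R} := \poly_(i < N) g i.

Lemma ser_ext g h N : (forall i, g i = h i) -> ser g N = ser h N.
Proof. by move=> H; apply/polyP=> i; rewrite !coef_poly H. Qed.

Lemma ser_scal c g N : ser (fun m => c * g m) N = c%:P * ser g N.
Proof. by apply/polyP=> i; rewrite coefCM !coef_poly; case: ifP; rewrite ?mulr0. Qed.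

Lemma ser_shift E G N : E 0%N = 1 -> (forall m, E m.+1 = G m) ->
  eqN N (ser E N) (1 + 'X * ser G N).
Proof.
move=> H0 HS i Hi; rewrite coefD coefXM coef1 !coef_poly Hi.
case: i Hi => [|i] Hi /=; first by rewrite H0 addr0.
by rewrite HS add0r (ltnW Hi).
Qed.

Lemma ser_conv (g h : nat -> R) N :
  eqN N (ser (fun a => \sum_(b < a) g b * h (a - b.+1)%N) N) ('X * (ser g N * ser h N)).
Proof.
move=> i Hi; rewrite coefXM coef_poly Hi.
case: i Hi => [|i] Hi /=; first by rewrite big_ord0.
rewrite coefM; apply: eq_bigr => j _; rewrite !coef_poly.
have Hj := ltn_ord j.
have -> : (j < N)%N by lia.
have -> : (i - j < N)%N by lia.
by rewrite subSS.
Qed.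

Definition wt (f : bool) (h : nat) : R := if odd h (+) f then xv else 1.

Fixpoint P (f : bool) (b t m h : nat) : R :=
  match m with
  | 0 => (h == t)%:R
  | m'.+1 => P f b t m' h.+1 + (if (b.+2 <= h)%N then wt f h * P f b t m' (h - 2) else 0)
  end.

Lemma P_shift f b t m h : P f b.+1 t.+1 m h.+1 = P (~~ f) b t m h.
Proof.
elim: m h => [|m IH] h /=; first by rewrite eqSS.
rewrite IH ltnS; case: ifP => // Hb.
have -> : (h.+1 - 2 = (h - 2).+1)%N by lia.
by rewrite IH /wt /= addNb addbN.
Qed.

Lemma id1 f m h : (0 < h)%N ->
  P f 0 0 m h = \sum_(a < m) P f 1 2 a h * (wt f 2 * P f 0 0 (m - a.+1) 0).
Proof.
elim: m h => [|m IH] h h0; first by rewrite big_ord0 /=; case: h h0.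
rewrite big_ord_recl /= subn1 /=.
under eq_bigr => i _ do rewrite /bump /= add0n add1n subSS mulrDl.
rewrite big_split /= -IH //.
case: h h0 => [|[|[|h]]] // _ /=.
- by rewrite big1 ?mul0r ?add0r ?addr0 // => i _; rewrite mul0r.
- by rewrite big1 ?mul0r ?add0r ?addr0 ?mul1r 1?addrC // => i _; rewrite mul0r.
- rewrite mul0r add0r; congr (_ + _).
  rewrite IH // mulr_sumr; apply: eq_bigr => i _; by rewrite mulrA.
Qed.

Lemma id2 f a h : (0 < h)%N -> P f 1 2 a h =
  (if (2 <= h)%N then P f 2 2 a h else 0) + \sum_(b < a) P f 1 1 b h * P f 2 2 (a - b.+1) 2.
Proof.
elim: a h => [|a IH] h h0.
  by rewrite big_ord0 addr0 /=; case: h h0 => [|[|[|h]]].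
rewrite big_ord_recl /= subn1 /=.
under eq_bigr => i _ do rewrite /bump /= add0n add1n subSS mulrDl.
rewrite big_split /= IH //.
case: h h0 => [|[|[|h]]] // _ /=.
- have Z : \sum_(i < a) 0 * P f 2 2 (a - i.+1) 2 = 0 by apply: big1 => i _; rewrite mul0r.
  rewrite Z; ring.
- have Z : \sum_(i < a) 0 * P f 2 2 (a - i.+1) 2 = 0 by apply: big1 => i _; rewrite mul0r.
  rewrite Z; ring.
- have -> : (h.+3 - 2 = h.+1)%N by lia.
  rewrite mul0r add0r IH //.
  rewrite [X in _ + (_ + X)](_ : _ = wt f h.+3 * \sum_(i < a) P f 1 1 i h.+1 * P f 2 2 (a - i.+1) 2); last first.
    by rewrite mulr_sumr; apply: eq_bigr => i _; rewrite mulrA.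
  case: h => [|h] /=; ring.
Qed.

Definition Ep f m := P f 0 0 m 0.

Lemma Lser f N : eqN N (ser (Ep f) N)
  (1 + (wt f 2)%:P * 'X^3 * (ser (Ep (~~ f)) N * ser (Ep f) N * ser (Ep f) N)).
Proof.
have S1 : eqN N (ser (Ep f) N) (1 + 'X * ser (fun m => P f 0 0 m 1) N).
  by apply: ser_shift => // m; rewrite /Ep /= addr0.
have S2 : ser (fun m => P f 0 0 m 1) N =
   ser (fun m => \sum_(a < m) P f 1 2 a 1 * (fun c => wt f 2 * Ep f c) (m - a.+1)%N) N.
  by apply: ser_ext => m; rewrite id1.
have S3 : ser (fun a => P f 1 2 a 1) N =
   ser (fun a => \sum_(b < a) Ep (~~ f) b * Ep f (a - b.+1)%N) N.
  apply: ser_ext => a; rewrite id2 // add0r; apply: eq_bigr => b _.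
  have E1 : P f 1 1 b 1 = P (~~ f) 0 0 b 0 by rewrite P_shift.
  have E2 : P f 2 2 (a - b.+1) 2 = P f 0 0 (a - b.+1) 0 by rewrite !P_shift negbK.
  by rewrite E1 E2.
have C2 := @ser_conv (fun a => P f 1 2 a 1) (fun c => wt f 2 * Ep f c) N.
have C3 := @ser_conv (Ep (~~ f)) (Ep f) N.
rewrite -S2 ser_scal S3 in C2.
apply: eqN_trans S1 _.
apply: eqN_trans (_ : eqN N _ (1 + 'X * ('X * ('X * (ser (Ep (~~ f)) N * ser (Ep f) N) * ((wt f 2)%:P * ser (Ep f) N))))) _.
  apply: eqN_add => //; apply: eqN_mul => //.
  apply: eqN_trans C2 _; apply: eqN_mul => //; apply: eqN_mul => //.
have E : forall p q w : {poly R}, 1 + 'X * ('X * ('X * (p * q) * (w * q))) = 1 + w * 'X^3 * (p * q * q) by move=> *; ring.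
by rewrite E.
Qed.


Lemma sum_tuple0 (F : seq bool -> R) :
  \sum_(p : 0.-tuple bool) F p = F [::].
Proof.
rewrite (big_pred1 [tuple]) // => p; rewrite [p]tuple0; exact/esym/eqP.
Qed.

Lemma sum_tuple_cons (F : seq bool -> R) m :
  \sum_(p : m.+1.-tuple bool) F p = \sum_(p : m.-tuple bool) (F (true :: p) + F (false :: p)).
Proof.
rewrite (reindex (fun q : bool * m.-tuple bool => [tuple of q.1 :: q.2])) /=; last first.
  exists (fun p : m.+1.-tuple bool => (thead p, [tuple of behead p])) => [[b t] _|p _].
    by congr pair; apply: val_inj.
  by apply: val_inj; case: p => [[|b s] //= Hs].
rewrite -(pair_bigA _ (fun b (p : m.-tuple bool) => F (b :: p))) /= big_bool /= -big_split.
by [].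
Qed.

Fixpoint pv (h : nat) (s : seq bool) : R :=
  match s with
  | [::] => (h == 0)%:R
  | b :: s' => if b then (if (2 <= h)%N then wt false h * pv (h - 2) s' else 0)
               else pv h.+1 s'
  end.

Lemma sum_pv m h : \sum_(p : m.-tuple bool) pv h p = P false 0 0 m h.
Proof.
elim: m h => [|m IH] h; first by rewrite sum_tuple0.
rewrite sum_tuple_cons /= big_split /= IH addrC; congr (_ + _).
case: ifP => _; last by rewrite big1.
by rewrite -mulr_sumr IH.
Qed.

Definition cond (e0 n0 : nat) (s : seq bool) : bool :=
  all (fun i => 2 * (n0 + count id (take i s)) <= e0 + count negb (take i s))%N
      (iota 0 (size s).+1)
  && (e0 + count negb s == 2 * (n0 + count id s))%N.

Definition wp (e0 : nat) (s : seq bool) : R :=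
  \prod_(0 <= i < size s) (if nth false s i && odd (e0 + count negb (take i s)) then xv else 1).

Lemma all_iotaS (Q : pred nat) n :
  all Q (iota 0 n.+1) = Q 0%N && all (fun i => Q i.+1) (iota 0 n).
Proof. by rewrite /= -(addn0 1%N) iotaDl all_map. Qed.

Lemma cond_cons e0 n0 b s : (2 * n0 <= e0)%N ->
  cond e0 n0 (b :: s) = cond (e0 + ~~ b) (n0 + b) s.
Proof.
move=> H; rewrite /cond [size _]/= all_iotaS take0 /= !addn0 H /=.
congr (_ && _); last by rewrite !addnA.
congr (_ && _); first by rewrite !addnA.
by apply: eq_all => i /=; rewrite !addnA.
Qed.

Lemma wp_cons e0 b s :
  wp e0 (b :: s) = (if b && odd e0 then xv else 1) * wp (e0 + ~~ b) s.
Proof.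
rewrite /wp /= big_nat_recl //= addn0; congr (_ * _).
by apply: eq_bigr => i _ /=; rewrite addnA.
Qed.

Lemma pvE s e0 n0 : (2 * n0 <= e0)%N ->
  pv (e0 - 2 * n0) s = (cond e0 n0 s)%:R * wp e0 s.
Proof.
elim: s e0 n0 => [|b s IH] e0 n0 H.
  rewrite /cond /wp /= big_nil mulr1 !addn0 H /=.
  by have -> : (e0 - 2 * n0 == 0)%N = (e0 == 2 * n0)%N by apply/eqP/eqP; lia.
rewrite cond_cons // wp_cons; case: b => /=.
  rewrite !addn0; case: (leqP (2 * n0.+1) e0) => H2.
    have -> : (2 <= e0 - 2 * n0)%N by lia.
    have -> : (e0 - 2 * n0 - 2 = e0 - 2 * (n0 + 1))%N by lia.
    rewrite IH ?addn1 // /wt /=.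
    have -> : odd (e0 - 2 * n0) = odd e0.
      by rewrite oddB ?odd_mul ?andFb ?addbF //; lia.
    by rewrite addbF mulrCA.
  have -> : (2 <= e0 - 2 * n0)%N = false by lia.
  rewrite /cond /= take0 /= !addn0.
  have -> : (2 * (n0 + 1) <= e0)%N = false by lia.
  by rewrite mul0r.
rewrite addn0 addn1 mul1r -IH; last by lia.
by congr pv; lia.
Qed.

Lemma forall_iota m (Q : pred nat) :
  [forall s : 'I_m, Q s] = all Q (iota 0 m).
Proof.
apply/forallP/allP => [H i|H i]; first by rewrite mem_iota add0n => Hi; apply: (H (Ordinal Hi)).
by apply: H; rewrite mem_iota add0n ltn_ord.
Qed.

Lemma Lpoly_P n : Lpoly (2 * n) n = P false 0 0 (2 * n + n) 0.
Proof.
rewrite /Lpoly -sum_pv big_mkcond /=; apply: eq_bigr => p _.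
have := @pvE p 0 0 (leqnn 0); rewrite muln0 subnn => ->.
have Hs := size_tuple p.
have -> : ends_at p && below_line p = cond 0 0 p.
  rewrite /ends_at /below_line (forall_iota _ (fun i => 2 * npre p i <= epre p i)%N).
  rewrite /cond /npre /epre Hs.
  rewrite take_oversize ?Hs // andbC; congr (_ && _).
  have := count_predC id p; rewrite Hs.
  have -> : count (predC id) p = count negb p by apply: eq_count.
  move=> Hc; apply/eqP/eqP; lia.
have -> : path_weight p = wp 0 p.
  rewrite /path_weight /wp Hs big_mkord; apply: eq_bigr => i _.
  by rewrite (tnth_nth false).
by case: (cond 0 0 p); rewrite ?mul1r ?mul0r.
Qed.


Lemma tree_ind' (Pr : tree -> Prop) :
  (forall ts, (forall t, t \in ts -> Pr t) -> Pr (Node ts)) -> forall t, Pr t.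
Proof.
move=> H; fix IH 1; case=> ts; apply: H; move: ts; fix G 1.
case=> [|v l] u; first by rewrite in_nil => F; exact: (False_ind _ (Bool.diff_false_true F)).
rewrite in_cons => /orP [/eqP -> | Hu]; first exact: IH.
exact: G l u Hu.
Qed.

Lemma sumn_even (T : Type) (f : T -> nat) l :
  all (fun t => ~~ odd (f t)) l -> ~~ odd (sumn (map f l)).
Proof. by elim: l => //= a l IH /andP [Ha Hl]; rewrite oddD (negbTE Ha) IH. Qed.

Lemma half_sumn (T : Type) (f : T -> nat) l :
  all (fun t => ~~ odd (f t)) l -> (sumn (map f l))./2 = sumn (map (fun t => (f t)./2) l).
Proof.
elim: l => //= a l IH /andP [Ha Hl]; rewrite halfD (negbTE Ha) /= IH //.
Qed.

Lemma sumn_take_drop (T : Type) (f : T -> nat) k l :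
  sumn (map f l) = sumn (map f (take k l)) + sumn (map f (drop k l)).
Proof. by rewrite -{1}(cat_take_drop k l) map_cat sumn_cat. Qed.

Lemma even_deg t : even_tree t -> ~~ odd (deg t).
Proof. by case: t => ts /= /andP []. Qed.

Lemma even_rdeg t : even_tree t -> ~~ odd (rdeg t).
Proof.
elim/tree_ind': t => ts IH /= /andP [_ Hall].
have E1 : ~~ odd (sumn (map rdeg ts)).
  by apply: sumn_even; apply/allP => t Ht; apply: IH => //; exact: (allP Hall).
have E2 : ~~ odd (sumn (map deg (drop (size ts)./2 ts))).
  apply: sumn_even; apply/allP => t Ht; apply: even_deg.
  by apply: (allP Hall); apply: mem_drop Ht.
by rewrite oddD (negbTE E1) (negbTE E2).
Qed.

Lemma rdeg_le t : (rdeg t + deg t <= edges t)%N.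
Proof.
elim/tree_ind': t => ts IH /=.
rewrite /deg /=.
have H1 : (sumn (map deg (drop (size ts)./2 ts)) <= sumn (map deg ts))%N.
  by rewrite (sumn_take_drop _ (size ts)./2 ts) leq_addl.
have H2 : (sumn (map rdeg ts) + sumn (map deg ts) + size ts <= sumn [seq (edges c).+1 | c <- ts])%N.
  elim: ts IH {H1} => //= c ts IHts IH.
  have := IH c (mem_head _ _).
  have := IHts (fun t Ht => IH t (@mem_behead _ (c :: ts) _ Ht)).
  lia.
apply: leq_trans H2; rewrite leq_add2r leq_add2l; exact: H1.
Qed.

Definition Aw (t : tree) : R := if even_tree t then 'X^(rindex t) else 0.
Definition Bw (t : tree) : R := if even_tree t then 'X^(rindex t + (deg t)./2) else 0.

Fixpoint W (k j : nat) (ts : seq tree) : R :=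
  match ts with
  | [::] => ((k == 0%N) && (j == 0%N))%:R
  | t :: r => match k with
              | k'.+1 => Aw t * W k' j r
              | 0 => match j with j'.+1 => Bw t * W 0 j' r | 0 => 0 end
              end
  end.

Lemma W_eq k j ts : W k j ts =
  (size ts == k + j)%N%:R * ((\prod_(t <- take k ts) Aw t) * \prod_(t <- drop k ts) Bw t).
Proof.
elim: ts k j => [|t r IH] k j /=.
  by rewrite !big_nil !mulr1 [(0 == _)%N]eq_sym addn_eq0.
case: k => [|k].
  case: j => [|j]; first by rewrite mul0r.
  by rewrite IH take0 drop0 !big_nil !mul1r big_cons eqSS add0n mulrCA.
by rewrite IH !big_cons addSn eqSS !mulrA [_ * Aw t]mulrC.
Qed.

Lemma prod_if (l : seq tree) (Pp : pred tree) (f : tree -> nat) :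
  \prod_(t <- l) (if Pp t then 'X^(f t) else 0 : R) =
  if all Pp l then 'X^(sumn (map f l)) else 0.
Proof.
elim: l => [|t l IH]; first by rewrite big_nil.
rewrite big_cons IH /=; case: (Pp t); last by rewrite mul0r.
by case: (all Pp l); rewrite ?mulr0 // exprD.
Qed.

Lemma sumn_mapD (T : Type) (f g : T -> nat) l :
  sumn (map (fun t => f t + g t) l) = sumn (map f l) + sumn (map g l).
Proof. by elim: l => //= a l ->; lia. Qed.

Lemma Aw_W ts : Aw (Node ts) = if odd (size ts) then 0 else W (size ts)./2 (size ts)./2 ts.
Proof.
rewrite /Aw /=; case Ho: (odd (size ts)) => //=.
rewrite W_eq.
have -> : (size ts == (size ts)./2 + (size ts)./2)%N.
  by apply/eqP; have := odd_double_half (size ts); rewrite Ho -addnn.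
rewrite mul1r /Aw /Bw.
rewrite (prod_if _ even_tree rindex) (prod_if _ even_tree (fun t => rindex t + (deg t)./2)).
rewrite -{1}(cat_take_drop (size ts)./2 ts) all_cat.
case Ht: (all even_tree (take (size ts)./2 ts)); last by rewrite mul0r.
case Hd: (all even_tree (drop (size ts)./2 ts)); last by rewrite mulr0.
rewrite -exprD; congr (_ ^+ _).
have Hall : all even_tree ts by rewrite -(cat_take_drop (size ts)./2 ts) all_cat Ht Hd.
rewrite /rindex /= halfD.
have E1 : ~~ odd (sumn (map rdeg ts)).
  by apply: sumn_even; apply/allP => t Ht'; apply: even_rdeg; exact: (allP Hall).
have Ed : all (fun t => ~~ odd (deg t)) (drop (size ts)./2 ts).
  by apply/allP => t Ht'; apply: even_deg; exact: (allP Hd).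
rewrite (negbTE E1) /= add0n (half_sumn Ed) sumn_mapD.
rewrite half_sumn; last by apply/allP => t Ht'; apply: even_rdeg; exact: (allP Hall).
rewrite (sumn_take_drop _ (size ts)./2 ts); lia.
Qed.

Lemma Bw_Aw t : Bw t = 'X^((deg t)./2) * Aw t.
Proof. by rewrite /Bw /Aw; case: ifP; rewrite ?mulr0 // -exprD addnC. Qed.


Lemma forests_S f e : forests f.+1 e.+1 =
  flatten [seq [seq Node c :: rest | c <- forests f a, rest <- forests f (e.+1 - a.+1)]
          | a <- iota 0 e.+1].
Proof. by []. Qed.

Lemma forests_fuel f g e : (e <= f)%N -> (e <= g)%N -> forests f e = forests g e.
Proof.
elim: f g e => [|f IH] [|g] [|e] Hf Hg //.
rewrite !forests_S; congr flatten; apply/eq_in_map => a.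
rewrite mem_iota add0n => /andP [_ Ha].
have E1 : forests f a = forests g a by apply: IH; lia.
have E2 : forests f (e.+1 - a.+1) = forests g (e.+1 - a.+1) by apply: IH; lia.
by rewrite E1 E2.
Qed.

Lemma forests_rec e : forests e.+1 e.+1 =
  flatten [seq [seq Node c :: rest | c <- forests a a, rest <- forests (e - a) (e - a)]
          | a <- iota 0 e.+1].
Proof.
rewrite forests_S; congr flatten; apply/eq_in_map => a.
rewrite mem_iota add0n => /andP [_ Ha].
rewrite subSS (@forests_fuel e a a) ?(@forests_fuel e (e - a) (e - a)) //; lia.
Qed.

Definition fedges (ts : seq tree) := sumn (map (fun c => (edges c).+1) ts).

Lemma forests_edges f e ts : ts \in forests f e -> fedges ts = e.
Proof.
elim: f e ts => [|f IH] e ts /=.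
  by case: eqP => [-> | _]; rewrite ?inE // => /eqP ->.
case: eqP => [-> | He]; first by rewrite inE => /eqP ->.
move=> /flattenP [l /mapP [a Ha ->]] /allpairsPdep [c [r [Hc Hr ->]]].
rewrite /fedges /= -/(fedges r) (IH _ _ Hr).
have := IH _ _ Hc; rewrite /fedges => ->.
move: Ha; rewrite mem_iota add0n; lia.
Qed.

Lemma size_fedges ts : (size ts <= fedges ts)%N.
Proof. by elim: ts => //= t ts IH; rewrite /fedges /= -/(fedges ts); lia. Qed.

Definition TE (a : nat) : R := \sum_(c <- forests a a) Aw (Node c).
Definition TO (a : nat) : R := \sum_(c <- forests a a) Bw (Node c).
Definition Sig (k j e : nat) : R := \sum_(ts <- forests e e) W k j ts.

Lemma Sig0 k j : Sig k j 0 = ((k == 0%N) && (j == 0%N))%:R.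
Proof. by rewrite /Sig /= big_seq1. Qed.

Lemma Sig_cons k j e : Sig k j e.+1 =
  \sum_(a < e.+1) \sum_(c <- forests a a) \sum_(r <- forests (e - a) (e - a)) W k j (Node c :: r).
Proof.
rewrite /Sig forests_rec big_flatten big_map.
have -> : iota 0 e.+1 = index_iota 0 e.+1 by rewrite /index_iota subn0.
rewrite big_mkord; apply: eq_bigr => a _.
by rewrite big_allpairs_dep.
Qed.

Lemma SigS k j e : Sig k.+1 j e.+1 = \sum_(a < e.+1) TE a * Sig k j (e - a).
Proof.
rewrite Sig_cons; apply: eq_bigr => a _.
rewrite /TE mulr_suml; apply: eq_bigr => c _.
by rewrite /Sig mulr_sumr.
Qed.

Lemma Sig0S j e : Sig 0 j.+1 e.+1 = \sum_(a < e.+1) TO a * Sig 0 j (e - a).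
Proof.
rewrite Sig_cons; apply: eq_bigr => a _.
rewrite /TO mulr_suml; apply: eq_bigr => c _.
by rewrite /Sig mulr_sumr.
Qed.

Lemma Sig00 e : Sig 0 0 e.+1 = 0.
Proof.
by rewrite Sig_cons big1 // => a _; rewrite big1 // => c _; rewrite big1.
Qed.


Lemma ser_ext_lt g h N : (forall i, (i < N)%N -> g i = h i) -> ser g N = ser h N.
Proof. by move=> H; apply/polyP=> i; rewrite !coef_poly; case: ifP => // /H. Qed.

Lemma ser_sum K (F : nat -> nat -> R) N :
  ser (fun m => \sum_(k < K) F k m) N = \sum_(k < K) ser (F k) N.
Proof.
apply/polyP=> i; rewrite coef_poly coef_sum; case: ifP => Hi.
  by apply: eq_bigr => k _; rewrite coef_poly Hi.
by rewrite big1 // => k _; rewrite coef_poly Hi.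
Qed.

Lemma ser0 N : ser (fun _ => 0) N = 0.
Proof. by apply/polyP=> i; rewrite coef_poly coef0; case: ifP. Qed.

Lemma eqN_sum K N (F G : nat -> {poly R}) :
  (forall k, eqN N (F k) (G k)) -> eqN N (\sum_(k < K) F k) (\sum_(k < K) G k).
Proof. by move=> H i Hi; rewrite !coef_sum; apply: eq_bigr => k _; apply: H. Qed.

Lemma SigSer k j N :
  eqN N (ser (Sig k j) N) (('X * ser TE N) ^+ k * ('X * ser TO N) ^+ j).
Proof.
elim: k j => [|k IHk] j.
  elim: j => [|j IHj].
    rewrite !expr0 mulr1.
    have := @ser_shift (Sig 0 0) (fun _ => 0) N; rewrite ser0 mulr0 addr0; apply.
      by rewrite Sig0.
    by move=> m; rewrite Sig00.
  have -> : ser (Sig 0 j.+1) N = ser (fun a => \sum_(b < a) TO b * Sig 0 j (a - b.+1)%N) N.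
    apply: ser_ext => [[|a]]; first by rewrite Sig0 big_ord0.
    by rewrite Sig0S; apply: eq_bigr => b _; rewrite subSS.
  apply: eqN_trans (@ser_conv TO (Sig 0 j) N) _.
  rewrite exprS expr0 mul1r -mulrA; apply: eqN_mul => //.
  by apply: eqN_mul => //; move: IHj; rewrite expr0 mul1r.
have -> : ser (Sig k.+1 j) N = ser (fun a => \sum_(b < a) TE b * Sig k j (a - b.+1)%N) N.
  apply: ser_ext => [[|a]]; first by rewrite Sig0 big_ord0.
  by rewrite SigS; apply: eq_bigr => b _; rewrite subSS.
apply: eqN_trans (@ser_conv TE (Sig k j) N) _.
have -> : ('X * ser TE N) ^+ k.+1 * ('X * ser TO N) ^+ j = 'X * (ser TE N * (('X * ser TE N) ^+ k * ('X * ser TO N) ^+ j)) by rewrite exprS; ring.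
by apply: eqN_mul => //; apply: eqN_mul.
Qed.

Lemma W_zero k j ts : (size ts != k + j)%N -> W k j ts = 0.
Proof. by rewrite W_eq => /negbTE ->; rewrite mul0r. Qed.

Lemma sumGW (G : nat -> R) c N : ((size c)./2 < N)%N ->
  \sum_(k < N) G k * W k k c =
  if odd (size c) then 0 else G (size c)./2 * W (size c)./2 (size c)./2 c.
Proof.
move=> HN; case Ho: (odd (size c)).
  rewrite big1 // => k _; rewrite W_zero ?mulr0 //.
  by apply/eqP => E; move: Ho; rewrite E addnn odd_double.
rewrite (bigD1 (Ordinal HN)) //= big1 ?addr0 // => k Hk; rewrite W_zero ?mulr0 //.
apply/eqP => E; move/eqP: Hk; apply; apply: val_inj => /=.
by rewrite E addnn doubleK.
Qed.

Lemma TE_Sig m N : (m < N)%N -> TE m = \sum_(k < N) Sig k k m.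
Proof.
move=> Hm; rewrite /TE /Sig exchange_big /=; apply: eq_big_seq => c Hc.
have Hs : ((size c)./2 < N)%N.
  have := size_fedges c; rewrite (forests_edges Hc) => H.
  have : ((size c)./2 <= m)%N by rewrite leq_half_double -addnn; apply: leq_trans H _; lia.
  lia.
transitivity (\sum_(k < N) (fun _ => 1 : R) k * W k k c); last by apply: eq_bigr => k _; rewrite mul1r.
rewrite (sumGW (fun _ => 1) Hs) Aw_W /=. case: ifP => _ //; by rewrite mul1r.

Qed.

Lemma TO_Sig m N : (m < N)%N -> TO m = \sum_(k < N) xv ^+ k * Sig k k m.
Proof.
move=> Hm.
have -> : \sum_(k < N) xv ^+ k * Sig k k m = \sum_(k < N) \sum_(c <- forests m m) xv ^+ k * W k k c.
  by apply: eq_bigr => k _; rewrite /Sig mulr_sumr.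
rewrite /TO exchange_big /=; apply: eq_big_seq => c Hc.
have Hs : ((size c)./2 < N)%N.
  have := size_fedges c; rewrite (forests_edges Hc) => H.
  have : ((size c)./2 <= m)%N by rewrite leq_half_double -addnn; apply: leq_trans H _; lia.
  lia.
rewrite (sumGW (fun k => xv ^+ k) Hs) Bw_Aw Aw_W /deg /=.
by case: ifP; rewrite ?mulr0.
Qed.

Lemma geo r N : eqN N (\sum_(k < N) ('X * r) ^+ k) (1 + 'X * r * \sum_(k < N) ('X * r) ^+ k).
Proof.
have E : 1 + 'X * r * \sum_(k < N) ('X * r) ^+ k = \sum_(k < N) ('X * r) ^+ k + ('X * r) ^+ N.
  transitivity (\sum_(k < N.+1) ('X * r) ^+ k); last by rewrite big_ord_recr.
  rewrite big_ord_recl expr0 mulr_sumr; congr (_ + _).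
  by apply: eq_bigr => k _; rewrite exprS.
rewrite E -{1}[\sum_(k < N) _]addr0; apply: eqN_add => //.
by rewrite exprMn; apply: eqN_sym; apply: eqN_Xn0.
Qed.

Lemma sysT N : sys 2 N (ser TE N) (ser TO N).
Proof.
have HTE : ser TE N = \sum_(k < N) ser (Sig k k) N.
  rewrite (ser_ext_lt (h := fun m => \sum_(k < N) Sig k k m)); last by move=> i Hi; rewrite (TE_Sig Hi).
  by rewrite (ser_sum N (fun k m => Sig k k m)).
have HTO : ser TO N = \sum_(k < N) (xv ^+ k)%:P * ser (Sig k k) N.
  rewrite (ser_ext_lt (h := fun m => \sum_(k < N) xv ^+ k * Sig k k m)); last by move=> i Hi; rewrite (TO_Sig Hi).
  rewrite (ser_sum N (fun k m => xv ^+ k * Sig k k m)); apply: eq_bigr => k _.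
  by rewrite ser_scal.
have HE : eqN N (ser TE N) (\sum_(k < N) ('X * ('X * ser TE N * ser TO N)) ^+ k).
  move=> i Hi; rewrite {1}HTE !coef_sum; apply: eq_bigr => k _.
  rewrite (SigSer k k Hi) -exprMn.
  by have -> : 'X * ser TE N * ('X * ser TO N) = 'X * ('X * ser TE N * ser TO N) by ring.
have HO : eqN N (ser TO N) (\sum_(k < N) ('X * (xv%:P * 'X * ser TE N * ser TO N)) ^+ k).
  move=> i Hi; rewrite {1}HTO !coef_sum; apply: eq_bigr => k _.
  have -> : ('X * (xv%:P * 'X * ser TE N * ser TO N)) ^+ k =
    (xv ^+ k)%:P * (('X * ser TE N) ^+ k * ('X * ser TO N) ^+ k).
    rewrite rmorphXn -!exprMn; congr (_ ^+ _); ring.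
  by rewrite !coefCM (SigSer k k Hi).
split.
  apply: eqN_trans (HE) _; apply: eqN_trans (@geo _ N) _.
  apply: eqN_trans (_ : eqN N _ (1 + 'X * ('X * ser TE N * ser TO N) * ser TE N)) _.
    by apply: eqN_add => //; apply: eqN_mul => //; apply: eqN_sym.
  by have -> : 1 + 'X * ('X * ser TE N * ser TO N) * ser TE N = 1 + 'X^2 * (ser TO N * ser TE N * ser TE N) by ring.
apply: eqN_trans (HO) _; apply: eqN_trans (@geo _ N) _.
apply: eqN_trans (_ : eqN N _ (1 + 'X * (xv%:P * 'X * ser TE N * ser TO N) * ser TO N)) _.
  by apply: eqN_add => //; apply: eqN_mul => //; apply: eqN_sym.
by have -> : 1 + 'X * (xv%:P * 'X * ser TE N * ser TO N) * ser TO N = 1 + xv%:P * 'X^2 * (ser TE N * ser TO N * ser TO N) by ring.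
Qed.


Lemma scaled_fun k1 k2 (g1 h1 g2 h2 : nat -> R) n : (0 < k1)%N -> (0 < k2)%N ->
  (forall N, sys k1 N (ser g1 N) (ser h1 N)) -> (forall N, sys k2 N (ser g2 N) (ser h2 N)) ->
  g1 (k1 * n)%N = g2 (k2 * n)%N.
Proof.
move=> k10 k20 S1 S2.
set M := n.+1.
have [E1 _] := sys_uniq k10 (S1 (k1 * M)%N) (sys_comp k10 (FG_sys M)).
have [E2 _] := sys_uniq k20 (S2 (k2 * M)%N) (sys_comp k20 (FG_sys M)).
have L1 : (k1 * n < k1 * M)%N by rewrite ltn_pmul2l.
have L2 : (k2 * n < k2 * M)%N by rewrite ltn_pmul2l.
have := E1 _ L1; have := E2 _ L2.
rewrite !coef_poly L1 L2 !coef_comp_poly_Xn // !dvdn_mulr // !mulKn // => -> ->.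
by [].
Qed.

Lemma sysL N : sys 3 N (ser (Ep false) N) (ser (Ep true) N).
Proof.
split.
  have := @Lser false N; rewrite /wt /= mul1r => H.
  by move=> i Hi; rewrite H // ?mulrA.
have := @Lser true N; rewrite /wt /= => H.
move=> i Hi; rewrite H //.
Qed.

Lemma count_sum (P : pred tree) (s : seq tree) (p : R) :
  p *+ count P s = \sum_(t <- s) (if P t then p else 0).
Proof.
elim: s => [|t s IH]; first by rewrite big_nil.
by rewrite big_cons /= mulrnDr IH; case: (P t); rewrite ?add0r.
Qed.

Lemma rindex_lt t n : even_tree t -> edges t = (2 * n)%N -> (0 < n)%N -> (rindex t < n)%N.
Proof.
move=> Ht He n0.
have H1 := rdeg_le t.
have Hd := even_deg Ht.
have Hr := even_rdeg Ht.
have D2 : (2 <= deg t)%N.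
  case: t Ht He Hd H1 Hr => [[|c [|c' ts]]] //= _ He.
  by move: He; lia.
have E := odd_double_half (rdeg t); rewrite (negbTE Hr) add0n -addnn in E.
rewrite /rindex; lia.
Qed.

Lemma Rpoly_TE n : (0 < n)%N -> Rpoly n = TE (2 * n).
Proof.
move=> n0; rewrite /Rpoly /Rcount /TE /trees_enum.
under eq_bigr do rewrite scaler_nat count_sum big_map.
rewrite exchange_big; apply: eq_big_seq => c Hc.
have He : edges (Node c) = (2 * n)%N by have := forests_edges Hc.
rewrite /Aw; case Ht: (even_tree (Node c)); last by rewrite big1 // => k.
have Hl := rindex_lt Ht He n0.
rewrite (bigD1 (Ordinal Hl)) //= eqxx big1 ?addr0 // => k Hk.
case: eqP => // E; move/eqP: Hk; case; apply: val_inj; by rewrite /= E.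
Qed.

Local Close Scope ring_scope.

Theorem mainTheorem2 (n : nat) : (1 <= n)%N -> Rpoly n = Lpoly (2 * n) n.
Proof.
move=> n0; rewrite Rpoly_TE // Lpoly_P.
have -> : (2 * n + n = 3 * n)%N by lia.
exact: (scaled_fun (h1 := TO) (h2 := Ep true) n (isT : (0 < 2)%N) (isT : (0 < 3)%N) sysT sysL).
Qed.
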